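(* If $\tau$ is a $\mathfrak{g}$-guarded decomposition of a $\sigma$-structure $\mathcal{A}$, then every clique in the Gaifman graph of $\mathcal{A}$ is contained in $\lambda(p)$ for some $p \in P_{\tau}$.
   Context: $\mathfrak{g}$ is atom, loose or clique guarding; plays are non-empty lists of $\mathfrak{g}$-guarded sets of $\mathcal{A}$, ordered by prefix $\sqsubseteq$, with $\lambda(p)$ the last element. For a focussed play $\langle p,a\rangle$ ($a\in\lambda(p)$), $[p,a]$ is its class under $\langle p,a\rangle\sim\langle q,a'\rangle$ iff $a=a'$, $p\sqcap q$ non-empty, and $a\in\lambda(u)$ for all $u$ on the prefix-order paths from $p\sqcap q$ to $p$ and $q$. A $\mathfrak{g}$-guarded decomposition is a map $\tau$ from $A$ to plays, with image $P_\tau$ (a forest under prefix order), that is reflexive ($a\in\lambda(\tau(a))$), edge covering (Gaifman-adjacent $a,b$ lie in some $\lambda(p)$, $p\in P_\tau$), minimal ($[\tau(a),a]=[q,a]$ implies $\tau(a)\sqsubseteq q$) and vertex connected (for $q$ below some element of $P_\tau$ with $a\in\lambda(q)$, $[\tau(a),a]=[q,a]$). *)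

(* Defs.v *)
From mathcomp Require Import all_boot.
Set Implicit Arguments. Unset Strict Implicit. Unset Printing Implicit Defensive.

Record signature := Signature { sym : Type; arity : sym -> nat }.

Record structure (s : signature) := Structure {
  dom :> finType;
  interp : forall R : sym s, (arity R).-tuple dom -> Prop }.

Section Defs.
Variables (s : signature) (A : structure s).

Definition co_atom (a b : A) : Prop :=
  exists (R : sym s) (t : (arity R).-tuple A),
    interp t /\ a \in (t : seq A) /\ b \in (t : seq A).

Definition gaifman_adj (a b : A) : Prop := a != b /\ co_atom a b.

Definition is_clique (C : {set A}) : Prop :=
  forall a b, a \in C -> b \in C -> a != b -> gaifman_adj a b.

End Defs.

Inductive guarding := AtomGuarding | LooseGuarding | CliqueGuarding.

Definition guarded (s : signature) (A : structure s) (g : guarding) (X : {set A}) : Prop :=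
  match g with
  | AtomGuarding =>
      (exists a, X = [set a]) \/
      exists (R : sym s) (t : (arity R).-tuple A),
        interp t /\ {subset X <= (t : seq A)}
  | LooseGuarding =>
      (exists a, X = [set a]) \/ (forall a b, a \in X -> b \in X -> co_atom a b)
  | CliqueGuarding => is_clique X
  end.

Section Plays.
Variables (s : signature) (A : structure s) (g : guarding).

Definition is_play (p : seq {set A}) : Prop :=
  p != [::] /\ forall X, X \in p -> guarded g X.

Definition lam (p : seq {set A}) : {set A} := last set0 p.

Definition pref (p q : seq {set A}) : bool := prefix p q.

Fixpoint meet (p q : seq {set A}) : seq {set A} :=
  match p, q with
  | x :: p', y :: q' => if x == y then x :: meet p' q' else [::]
  | _, _ => [::]
  end.

Definition on_path (r p : seq {set A}) (a : A) : Prop :=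
  forall u, pref r u -> pref u p -> a \in lam u.

Definition sim (p : seq {set A}) (a : A) (q : seq {set A}) (a' : A) : Prop :=
  a = a' /\ meet p q != [::] /\ on_path (meet p q) p a /\ on_path (meet p q) q a.

Definition focussed (p : seq {set A}) (a : A) : Prop := is_play p /\ a \in lam p.

(* [p,a] = [q,a'] : equality of the equivalence classes (within focussed plays) *)
Definition same_class (p : seq {set A}) (a : A) (q : seq {set A}) (a' : A) : Prop :=
  forall r b, focussed r b -> (sim p a r b <-> sim q a' r b).

Definition in_image (tau : A -> seq {set A}) (p : seq {set A}) : Prop :=
  exists c, tau c = p.

Definition guarded_decomposition (tau : A -> seq {set A}) : Prop :=
  (forall a, is_play (tau a))
  /\
  (forall a, a \in lam (tau a))
  /\
  (forall a b, gaifman_adj a b -> exists c, a \in lam (tau c) /\ b \in lam (tau c))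
  /\
  (forall a q, focussed q a -> same_class (tau a) a q a -> pref (tau a) q)
  /\
  (forall a q c, q != [::] -> pref q (tau c) -> a \in lam q -> same_class (tau a) a q a).

End Plays.

(* Main.v *)
Require Import Defs.
From mathcomp Require Import all_boot.

Lemma meet_cat (sg : signature) (T : structure sg) (p r : seq {set T}) : meet p (p ++ r) = p.
Proof. by elim: p => [|x p IH] //=; rewrite eqxx IH. Qed.

Lemma meet_pref (sg : signature) (T : structure sg) (p q : seq {set T}) : prefix p q -> meet p q = p.
Proof. by case/prefixP=> r ->; exact: meet_cat. Qed.

Lemma pref_comparable (T : eqType) (a b c : seq T) :
  prefix a c -> prefix b c -> size b <= size a -> prefix b a.
Proof.
rewrite !prefixE => /eqP Ha /eqP Hb Hs.
by rewrite -Ha take_takel // Hb.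
Qed.

Theorem lemma4p3 (s : signature) (A : structure s) (g : guarding)
    (tau : A -> seq {set A}) :
  guarded_decomposition g tau ->
  forall C : {set A}, C != set0 -> is_clique C ->
    exists c : A, C \subset lam (tau c).
Proof.
move=> [Hplay [Hrefl [Hedge [Hmin Hvc]]]] C /set0Pn [a0 Ha0] Hcl.
have key : forall b c, b \in lam (tau c) ->
    prefix (tau b) (tau c) /\ on_path (tau b) (tau c) b.
  move=> b c Hb.
  have Hne : tau c != [::] by case: (Hplay c).
  have Hsc := Hvc b (tau c) c Hne (prefix_refl _) Hb.
  have Hfoc : focussed g (tau c) b by split.
  have Hp := Hmin b (tau c) Hfoc Hsc.
  split => //.
  have Hsim : sim (tau c) b (tau c) b.
    rewrite /sim meet_pref ?prefix_refl //; split=> //; split=> //.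
    have op : on_path (tau c) (tau c) b.
      move=> u H1 H2.
      have -> : u = tau c.
        move: H1 H2; rewrite /pref !prefixE => /eqP H1 /eqP H2.
        have Hs : size u = size (tau c).
          apply/eqP; rewrite eqn_leq; apply/andP; split.
            by rewrite -{1}H2 size_take; case: ltnP => // /ltnW.
          by rewrite -{1}H1 size_take; case: ltnP => // /ltnW.
        by rewrite -H2 Hs take_size.
      done.
    by split.
  have := (proj2 (Hsc (tau c) b Hfoc)) Hsim.
  by move=> [_ [_ [_ H]]]; rewrite meet_pref in H.
pose a := [arg max_(i > a0 in C) size (tau i)].
have [Ha Hmax] : a \in C /\ forall b, b \in C -> size (tau b) <= size (tau a).
  rewrite /a; case: arg_maxnP => //= i Hi H; split => // b Hb; exact: H.
exists a; apply/subsetP => b Hb.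
have [->|Hab] := eqVneq a b; first exact: Hrefl.
have [c [Hac Hbc]] := Hedge a b (Hcl a b Ha Hb Hab).
have [Pa _] := key a c Hac.
have [Pb Ob] := key b c Hbc.
apply: Ob => //.
exact: pref_comparable Pa Pb (Hmax b Hb).
Qed.
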